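(* Let $p,r$ be coprime positive integers and $q=0$. Then $\mathcal O(L_0(p,r))$, with the $\mathbb C[u,u^{-1}]$-coaction given by its $\mathbb Z$-grading, is a quantum principal $U(1)$-fibration (principal $\mathbb C[u,u^{-1}]$-comodule algebra) over its coinvariant subalgebra $\mathcal O(\mathbb{WP}_0(1,r))$.
   Context: $\mathcal O(SU_0(2))$ is the unital complex $*$-algebra generated by $\alpha,\beta$ with relations $\beta\alpha=0$, $\beta^*\alpha=0$, $\beta\beta^*=\beta^*\beta$, $\alpha^*\alpha=1$, $\alpha\alpha^*+\beta\beta^*=1$. Give it the $\mathbb Z$-grading (weight) $w(\alpha)=1$, $w(\alpha^* )=-1$, $w(\beta)=r$, $w(\beta^* )=-r$. $\mathcal O(L_0(p,r))$ is the subalgebra of elements whose homogeneous components have weight in $p\mathbb Z$, graded by $\deg=w/p$, with coaction $\rho(x)=x\otimes u^{n}$ for $x$ of degree $n$; $\mathcal O(\mathbb{WP}_0(1,r))$ is its degree-zero subalgebra $B$. $A$ is a quantum principal fibration over $B$ if the canonical map $A\otimes_BA\to A\otimes\mathbb C[u,u^{-1}]$, $x\otimes y\mapsto xy\otimes u^n$ ($y$ of degree $n$), is bijective and the multiplication map $B\otimes A\to A$ admits a splitting that is a left $B$-module and right $\mathbb C[u,u^{-1}]$-comodule map. *)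

(* Defs.v *)
(* The complex numbers are  R[i] = complex R  for an
   arbitrary  R : realType  (every realType is (isomorphic to) the reals). *)
From HB Require Import structures.
From mathcomp Require Import all_boot all_order all_algebra.
From mathcomp Require Import complex reals.
Set Implicit Arguments. Unset Strict Implicit. Unset Printing Implicit Defensive.
Import Order.TTheory GRing.Theory Num.Theory.
Local Open Scope ring_scope.

Section Defs.
Variable R : realType.
Local Notation C := (complex R).

Definition is_star (A : algType C) (s : A -> A) : Prop :=
  (forall x y, s (x + y) = s x + s y) /\
  (forall (c : C) x, s (c *: x) = (Num.conj c) *: s x) /\
  (forall x y, s (x * y) = s y * s x) /\
  (forall x, s (s x) = x).

Definition star_alg_hom (A A' : algType C) (s : A -> A) (s' : A' -> A')
    (f : A -> A') : Prop :=
  (forall x y, f (x + y) = f x + f y) /\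
  (forall (c : C) x, f (c *: x) = c *: f x) /\
  (forall x y, f (x * y) = f x * f y) /\
  f 1 = 1 /\
  (forall x, f (s x) = s' (f x)).

(* The defining relations of O(SU_0(2)) for generators alpha = a, beta = b. *)
Definition su0_rels (A : algType C) (s : A -> A) (a b : A) : Prop :=
  b * a = 0 /\ s b * a = 0 /\ b * s b = s b * b /\ s a * a = 1 /\
  a * s a + b * s b = 1.

Definition is_O_SU0 (A : algType C) (s : A -> A) (a b : A) : Prop :=
  is_star s /\ su0_rels s a b /\
  forall (A' : algType C) (s' : A' -> A') (a' b' : A'),
    is_star s' -> su0_rels s' a' b' ->
    exists f : A -> A',
      (star_alg_hom s s' f /\ f a = a' /\ f b = b') /\
      forall g : A -> A', star_alg_hom s s' g -> g a = a' -> g b = b' ->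
        forall x, g x = f x.

(* pi k x is the weight-k homogeneous component of x: the pi k are linear
   projections onto a direct sum decomposition A = (+)_k A_k, the grading is
   multiplicative, and w(alpha)=1, w(alpha^* )=-1, w(beta)=r, w(beta^* )=-r. *)
Definition is_weight_grading (A : algType C) (s : A -> A) (a b : A) (r : nat)
    (pi : int -> A -> A) : Prop :=
  (forall k x y, pi k (x + y) = pi k x + pi k y) /\
  (forall k (c : C) x, pi k (c *: x) = c *: pi k x) /\
  (forall x, exists S : seq int,
      uniq S /\ x = \sum_(k <- S) pi k x /\ (forall k, k \notin S -> pi k x = 0)) /\
  (forall k l x, pi k (pi l x) = if k == l then pi l x else 0) /\
  (forall k l x y, pi (k + l) (pi k x * pi l y) = pi k x * pi l y) /\
  pi 1 a = a /\ pi (-1) (s a) = s a /\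
  pi (r%:Z) b = b /\ pi (- r%:Z) (s b) = s b.

Variable A : algType C.
Variable p : nat.
Variable pi : int -> A -> A.

(* O(L_0(p,r)): elements all of whose homogeneous components have weight in pZ *)
Definition inL (x : A) : Prop :=
  forall k : int, pi k x <> 0 -> exists n : int, k = n * p%:Z.

(* its degree-n component (deg = w/p) *)
Definition degc (n : int) (x : A) : A := pi (n * p%:Z) x.

(* O(WP_0(1,r)) = degree-zero part of O(L_0(p,r)) *)
Definition inB (x : A) : Prop := forall k : int, k != 0 -> pi k x = 0.

(* An element of L (x)_B L is represented by a finite list of pairs in L x L
   (the element sum x_i (x) y_i); two lists represent the same element iff
   every B-balanced biadditive map out of L x L agrees on them. *)
Definition balancedB (V : zmodType) (f : A -> A -> V) : Prop :=
  (forall x x' y, inL x -> inL x' -> inL y -> f (x + x') y = f x y + f x' y) /\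
  (forall x y y', inL x -> inL y -> inL y' -> f x (y + y') = f x y + f x y') /\
  (forall x c y, inL x -> inB c -> inL y -> f (x * c) y = f x (c * y)).

Definition tensB_eq (t1 t2 : seq (A * A)) : Prop :=
  forall (V : zmodType) (f : A -> A -> V), balancedB f ->
    \sum_(xy <- t1) f xy.1 xy.2 = \sum_(xy <- t2) f xy.1 xy.2.

(* Same for B (x)_C L : C-balanced biadditive maps out of B x L. *)
Definition balancedC (V : zmodType) (f : A -> A -> V) : Prop :=
  (forall x x' y, inB x -> inB x' -> inL y -> f (x + x') y = f x y + f x' y) /\
  (forall x y y', inB x -> inL y -> inL y' -> f x (y + y') = f x y + f x y') /\
  (forall x (c : C) y, inB x -> inL y -> f (c *: x) y = f x (c *: y)).

Definition tensC_eq (t1 t2 : seq (A * A)) : Prop :=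
  forall (V : zmodType) (f : A -> A -> V), balancedC f ->
    \sum_(xy <- t1) f xy.1 xy.2 = \sum_(xy <- t2) f xy.1 xy.2.

(* The canonical map  L (x)_B L -> L (x) C[u,u^-1],  x (x) y |-> sum_n x y_n (x) u^n,
   where an element of L (x) C[u,u^-1] is identified with the finitely
   supported family n |-> (coefficient of u^n) in L. *)
Definition can_map (t : seq (A * A)) (n : int) : A :=
  \sum_(xy <- t) xy.1 * degc n xy.2.

Definition quantum_principal_fibration : Prop :=
  (forall t1 t2 : seq (A * A),
      (forall xy, xy \in t1 -> inL xy.1 /\ inL xy.2) ->
      (forall xy, xy \in t2 -> inL xy.1 /\ inL xy.2) ->
      (forall n, can_map t1 n = can_map t2 n) -> tensB_eq t1 t2) /\
  (forall g : int -> A, (forall n, inL (g n)) ->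
      (exists S : seq int, forall n, n \notin S -> g n = 0) ->
      exists t : seq (A * A),
        (forall xy, xy \in t -> inL xy.1 /\ inL xy.2) /\
        forall n, can_map t n = g n) /\
  (* the multiplication B (x) L -> L has a splitting sp : L -> B (x) L which is
     a left B-module map and a right C[u,u^-1]-comodule map *)
  exists sp : A -> seq (A * A),
    (forall x, inL x -> forall xy, xy \in sp x -> inB xy.1 /\ inL xy.2) /\
    (forall x, inL x -> \sum_(xy <- sp x) xy.1 * xy.2 = x) /\
    (forall x y, inL x -> inL y -> tensC_eq (sp (x + y)) (sp x ++ sp y)) /\
    (forall c x, inB c -> inL x ->
       tensC_eq (sp (c * x)) [seq (c * xy.1, xy.2) | xy <- sp x]) /\
    (forall x n, inL x ->
       tensC_eq [seq (xy.1, degc n xy.2) | xy <- sp x] (sp (degc n x))).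

End Defs.

(* Main.v *)
Require Import Defs.
From HB Require Import structures.
From mathcomp Require Import all_boot all_order all_algebra.
From mathcomp Require Import complex reals.
From mathcomp Require Import zify ring.
From Stdlib Require Import ClassicalEpsilon.
Import Order.TTheory GRing.Theory Num.Theory.
Local Open Scope ring_scope.
Set Implicit Arguments. Unset Strict Implicit. Unset Printing Implicit Defensive.

Lemma sum_supp (V : zmodType) (F : int -> V) (P : pred int) (T1 T2 : seq int) :
  (forall k, ~~ P k -> F k = 0) -> uniq T1 -> uniq T2 ->
  (forall k, P k -> k \in T1) -> (forall k, P k -> k \in T2) ->
  \sum_(k <- T1) F k = \sum_(k <- T2) F k.
Proof.
move=> F0 u1 u2 h1 h2.
have e1 : \sum_(k <- T1) F k = \sum_(k <- T1 | P k) F k.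
  rewrite [RHS]big_mkcond; apply: eq_bigr => k _; case: ifP => //.
  move=> /negbT /F0 h; exact h.
have e2 : \sum_(k <- T2) F k = \sum_(k <- T2 | P k) F k.
  rewrite [RHS]big_mkcond; apply: eq_bigr => k _; case: ifP => //.
  move=> /negbT /F0 h; exact h.
rewrite e1 e2 -[LHS]big_filter -[RHS]big_filter.
apply: perm_big; apply: uniq_perm; rewrite ?filter_uniq // => k.
rewrite !mem_filter; case Pk: (P k) => //=.
by rewrite h1 // h2.
Qed.

Lemma dvdz_add (d u v : int) : (d %| u)%Z -> (d %| v)%Z -> (d %| u + v)%Z.
Proof.
move=> /dvdzP[q1 ->] /dvdzP[q2 ->]; apply/dvdzP; exists (q1 + q2); by rewrite mulrDl.
Qed.

Section Basics.
Variable R : realType.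
Variable A : algType (complex R).
Variable pi : int -> A -> A.
Variable p : nat.
Hypothesis p_gt0 : (0 < p)%N.
Hypothesis piD : forall k x y, pi k (x + y) = pi k x + pi k y.
Hypothesis pidec : forall x, exists S : seq int,
      uniq S /\ x = \sum_(k <- S) pi k x /\ (forall k, k \notin S -> pi k x = 0).
Hypothesis piorth : forall k l x, pi k (pi l x) = if k == l then pi l x else 0.
Hypothesis pimul : forall k l x y, pi (k + l) (pi k x * pi l y) = pi k x * pi l y.

Lemma pi0 k : pi k 0 = 0.
Proof. by apply: (addrI (pi k 0)); rewrite -piD !addr0. Qed.

Lemma pi_sum (I : Type) k (s : seq I) (F : I -> A) :
  pi k (\sum_(i <- s) F i) = \sum_(i <- s) pi k (F i).
Proof.
elim: s => [|x s IH]; first by rewrite !big_nil pi0.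
by rewrite !big_cons piD IH.
Qed.

Definition hom k (x : A) := pi k x = x.

Lemma hom_pi k x : hom k (pi k x).
Proof. by rewrite /hom piorth eqxx. Qed.

Lemma pi_hom w z j : hom w z -> pi j z = if j == w then z else 0.
Proof. by move=> h; rewrite -h piorth h. Qed.

Lemma homE k k' x : hom k x -> k = k' -> hom k' x.
Proof. by move=> h <-. Qed.

Lemma hom_mul k l x y : hom k x -> hom l y -> hom (k + l) (x * y).
Proof. by move=> hx hy; rewrite /hom -{1}hx -{1}hy pimul hx hy. Qed.

Lemma hom0 k : hom k 0.
Proof. exact: pi0. Qed.

Definition supp (x : A) : seq int :=
  proj1_sig (constructive_indefinite_description _ (pidec x)).

Lemma suppP x : uniq (supp x) /\ x = \sum_(k <- supp x) pi k x /\
   (forall k, k \notin supp x -> pi k x = 0).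
Proof. rewrite /supp; case: constructive_indefinite_description => //. Qed.

Lemma supp_nz x k : pi k x != 0 -> k \in supp x.
Proof.
case: (suppP x) => _ [_ h] nz; apply/negPn/negP => /h e.
by rewrite e eqxx in nz.
Qed.

Lemma dec_flex x T : uniq T -> (forall k, pi k x != 0 -> k \in T) ->
  x = \sum_(k <- T) pi k x.
Proof.
move=> uT hT; case: (suppP x) => u [e _].
rewrite {1}e; apply: (sum_supp (P := fun k => pi k x != 0)) => //.
- by move=> k /negPn/eqP.
- exact: supp_nz.
Qed.

Lemma pi_mulr w z x k : hom w z -> pi k (x * z) = pi (k - w) x * z.
Proof.
move=> hz; case: (suppP x) => _ [e _].
rewrite {1}e big_distrl pi_sum /=.
rewrite [in RHS]e pi_sum big_distrl /=; apply: eq_bigr => j _.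
have hj : hom (j + w) (pi j x * z) by apply: hom_mul => //; apply: hom_pi.
rewrite (pi_hom k hj) piorth.
have -> : (k == j + w) = (k - w == j).
  by apply/eqP/eqP => [->|<-]; rewrite ?addrK ?subrK.
by case: eqP => // _; rewrite mul0r.
Qed.

Lemma pi_mull w z x k : hom w z -> pi k (z * x) = z * pi (k - w) x.
Proof.
move=> hz; case: (suppP x) => _ [e _].
rewrite {1}e big_distrr pi_sum /=.
rewrite [in RHS]e pi_sum big_distrr /=; apply: eq_bigr => j _.
have hj : hom (w + j) (z * pi j x) by apply: hom_mul => //; apply: hom_pi.
rewrite (pi_hom k hj) piorth.
have -> : (k == w + j) = (k - w == j).
  by apply/eqP/eqP => [->|<-]; rewrite ?(addrC w) ?addrK ?subrK.
by case: eqP => // _; rewrite mulr0.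
Qed.

Lemma inL_dvd x k : inL p pi x -> pi k x != 0 -> (p%:Z %| k)%Z.
Proof. by move=> h /eqP /h [n ->]; apply: dvdz_mull; apply: dvdzz. Qed.

Lemma inL_hom w z : hom w z -> (p%:Z %| w)%Z -> inL p pi z.
Proof.
move=> hz d k; rewrite (pi_hom k hz); case: eqP => // -> _.
by exists (w %/ p)%Z; rewrite divzK.
Qed.

Lemma inL0 : inL p pi 0.
Proof. by move=> k; rewrite pi0. Qed.

Lemma inLD x y : inL p pi x -> inL p pi y -> inL p pi (x + y).
Proof.
move=> hx hy k; rewrite piD => nz.
case: (eqVneq (pi k x) 0) => [e|]; last by move/eqP; apply: hx.
by apply: hy => e'; apply: nz; rewrite e e' addr0.
Qed.

Lemma inL_sum (I : eqType) (s : seq I) (F : I -> A) :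
  (forall i, i \in s -> inL p pi (F i)) -> inL p pi (\sum_(i <- s) F i).
Proof.
elim: s => [|i s IH] h; first by rewrite big_nil; exact: inL0.
rewrite big_cons; apply: inLD; first by apply: (h i); rewrite in_cons eqxx.
by apply: IH => j js; apply: h; rewrite in_cons js orbT.
Qed.

Lemma inL_mulr x w z : inL p pi x -> hom w z -> (p%:Z %| w)%Z -> inL p pi (x * z).
Proof.
move=> hx hz d k; rewrite (pi_mulr _ _ hz) => nz.
have nz' : pi (k - w) x != 0 by apply/eqP => e; apply: nz; rewrite e mul0r.
have := dvdz_add (inL_dvd hx nz') d; rewrite subrK => dk.
by exists (k %/ p)%Z; rewrite divzK.
Qed.

Lemma inL_mull x w z : inL p pi x -> hom w z -> (p%:Z %| w)%Z -> inL p pi (z * x).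
Proof.
move=> hx hz d k; rewrite (pi_mull _ _ hz) => nz.
have nz' : pi (k - w) x != 0 by apply/eqP => e; apply: nz; rewrite e mulr0.
have := dvdz_add (inL_dvd hx nz') d; rewrite subrK => dk.
by exists (k %/ p)%Z; rewrite divzK.
Qed.

Lemma inL_pi x k : inL p pi x -> inL p pi (pi k x).
Proof.
move=> hx j; rewrite piorth; case: eqP => // -> nz; exact: hx.
Qed.

Lemma inB_hom z : hom 0 z -> inB pi z.
Proof. by move=> hz k nz; rewrite (pi_hom k hz) (negbTE nz). Qed.

Lemma inB_hom0 c : inB pi c -> hom 0 c.
Proof.
move=> hc; rewrite /hom; case: (suppP c) => _ [e _].
rewrite {2}e {1}e pi_sum; apply: eq_bigr => k _; rewrite piorth.
by case: eqP => // /eqP; rewrite eq_sym => /hc ->.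
Qed.

Lemma inB_inL c : inB pi c -> inL p pi c.
Proof.
move=> /inB_hom0 h; apply: (inL_hom h); exact: dvdz0.
Qed.


Variable s : A -> A.
Variables a b : A.
Variable r' : nat.
Hypothesis rel1 : b * a = 0.
Hypothesis rel2 : s b * a = 0.
Hypothesis rel3 : b * s b = s b * b.
Hypothesis rel4 : s a * a = 1.
Hypothesis rel5 : a * s a + b * s b = 1.
Hypothesis pia : pi 1 a = a.
Hypothesis pisa : pi (-1) (s a) = s a.
Hypothesis pib : pi (r'.+1%:Z) b = b.
Hypothesis pisb : pi (- r'.+1%:Z) (s b) = s b.

Lemma hom1 : hom 0 1.
Proof.
have := pimul (-1) 1 (s a) a; rewrite pisa pia rel4 addNr => h; exact h.
Qed.

Lemma hom_exp k x n : hom k x -> hom (n%:Z * k) (x ^+ n).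
Proof.
move=> hx; elim: n => [|n IH]; first by rewrite expr0 mul0r; exact: hom1.
rewrite exprS; apply: homE (hom_mul hx IH) _.
by rewrite intS mulrDl mul1r.
Qed.

Lemma sa_pow n : s a ^+ n * a ^+ n = 1.
Proof.
elim: n => [|n IH]; first by rewrite !expr0 mulr1.
by rewrite exprSr exprS mulrA -(mulrA (s a ^+ n) (s a) a) rel4 mulr1 IH.
Qed.

Lemma bsbsb : b * (s b * s b) = s b.
Proof.
have e : b * s b = 1 - a * s a.
  by rewrite -rel5 [a * s a + _]addrC addrK.
rewrite mulrA rel3 -mulrA e mulrBr mulr1 mulrA rel2 mul0r subr0.
done.
Qed.

Lemma bpow n : b ^+ n.+1 * s b ^+ n.+1 = b * s b.
Proof.
elim: n => [|n IH]; first by rewrite !expr1.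
rewrite exprSr (exprS (s b) n.+1) (exprS (s b) n) !mulrA.
rewrite -(mulrA (b ^+ n.+1 * b) (s b) (s b)) -(mulrA (b ^+ n.+1) b) bsbsb.
by rewrite -mulrA -exprS IH.
Qed.

Lemma tele w : a ^+ w * s a ^+ w + \sum_(i <- iota 0 w) a ^+ i * (b * s b) * s a ^+ i = 1.
Proof.
elim: w => [|w IH]; first by rewrite !expr0 mulr1 big_nil addr0.
have -> : iota 0 w.+1 = iota 0 w ++ [:: w] by rewrite -addn1 iotaD.
rewrite big_cat /= big_seq1.
have h : a ^+ w.+1 * s a ^+ w.+1 + a ^+ w * (b * s b) * s a ^+ w = a ^+ w * s a ^+ w.
  rewrite exprSr exprS mulrA -(mulrA (a ^+ w) a) -mulrDl -mulrDr rel5 mulr1.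
  done.
by rewrite addrCA h addrC IH.
Qed.

Definition omN (N : nat) : seq (A * A) :=
  (a ^+ N.+1, s a ^+ N.+1) ::
      [seq (a ^+ i * b ^+ N.+1 * s a ^+ (i + r' * N.+1),
            a ^+ (i + r' * N.+1) * s b ^+ N.+1 * s a ^+ i) | i <- iota 0 N.+1].
Arguments omN : simpl never.

Definition omega (k : int) : seq (A * A) :=
  match k with
  | Posz N => [:: (s a ^+ N, a ^+ N)]
  | Negz N => omN N
  end.

Lemma omega_sum k : \sum_(lr <- omega k) lr.1 * lr.2 = 1.
Proof.
case: k => [N|N] /=; first by rewrite big_seq1 sa_pow.
rewrite /omN big_cons big_map -(tele N.+1); congr (_ + _).
apply: eq_bigr => i _ /=.
rewrite !mulrA -(mulrA (a ^+ i * b ^+ N.+1)) sa_pow mulr1.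
by rewrite -(mulrA (a ^+ i)) bpow !mulrA.
Qed.

Lemma hb : hom (r'.+1%:Z) b. Proof. exact: pib. Qed.
Lemma hsb : hom (- r'.+1%:Z) (s b). Proof. exact: pisb. Qed.
Lemma ha : hom 1 a. Proof. exact: pia. Qed.
Lemma hsa : hom (-1) (s a). Proof. exact: pisa. Qed.

Lemma omega_hom k lr : lr \in omega k -> hom (- k) lr.1 /\ hom k lr.2.
Proof.
case: k => [N|N] /=.
  rewrite inE => /eqP -> /=; split.
    by apply: homE (hom_exp N hsa) _; rewrite mulrN1.
  by apply: homE (hom_exp N ha) _; rewrite mulr1.
rewrite /omN in_cons => /orP [/eqP -> /=|/mapP [i _ ->] /=]; split.
- by apply: homE (hom_exp N.+1 ha) _; rewrite mulr1 NegzE opprK.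
- by apply: homE (hom_exp N.+1 hsa) _; rewrite mulrN1 NegzE.
- apply: homE (hom_mul (hom_mul (hom_exp i ha) (hom_exp N.+1 hb)) (hom_exp _ hsa)) _.
  rewrite NegzE opprK; nia.
- apply: homE (hom_mul (hom_mul (hom_exp _ ha) (hom_exp N.+1 hsb)) (hom_exp i hsa)) _.
  rewrite NegzE; nia.
Qed.


Lemma p_neq0 : p%:Z != 0.
Proof. by rewrite eqz_nat -lt0n. Qed.

Lemma omega_L k lr : lr \in omega k -> (p%:Z %| k)%Z -> inL p pi lr.2.
Proof. by move=> /omega_hom [_ h] d; apply: inL_hom h d. Qed.

Lemma omega_B k z lr : lr \in omega k -> hom k z -> hom 0 (z * lr.1).
Proof.
move=> /omega_hom [h _] hz; apply: homE (hom_mul hz h) _; exact: subrr.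
Qed.

Lemma surj (g : int -> A) : (forall n, inL p pi (g n)) ->
  (exists S : seq int, forall n, n \notin S -> g n = 0) ->
  exists t : seq (A * A),
    (forall xy, xy \in t -> inL p pi xy.1 /\ inL p pi xy.2) /\
    forall n, can_map p pi t n = g n.
Proof.
move=> gL [S hS].
exists (flatten [seq [seq (g n * lr.1, lr.2) | lr <- omega (n * p%:Z)] | n <- undup S]).
split.
  move=> xy /flatten_mapP [n _ /mapP [lr lrin ->]] /=.
  have d : (p%:Z %| n * p%:Z)%Z by apply: dvdz_mull; exact: dvdzz.
  split; last exact: omega_L lrin d.
  have [h _] := omega_hom lrin.
  apply: inL_mulr (gL n) h _; rewrite -mulNr; apply/dvdzP; exists (- n); done.
move=> m; rewrite /can_map big_flatten big_map.
have e : forall n, \sum_(xy <- [seq (g n * lr.1, lr.2) | lr <- omega (n * p%:Z)])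
      xy.1 * degc p pi m xy.2 = if n == m then g n else 0.
  move=> n; rewrite big_map /degc.
  case: eqP => [->|nm].
    rewrite -[RHS]mulr1 -(omega_sum (m * p%:Z)) big_distrr /=.
    apply: eq_big_seq => lr lrin.
    have [_ h] := omega_hom lrin.
    by rewrite (pi_hom _ h) eqxx mulrA.
  apply: big1_seq => lr /andP [_ lrin] /=.
  have [_ h] := omega_hom lrin.
  rewrite (pi_hom _ h) (inj_eq (mulIf p_neq0)).
  have -> : (m == n) = false by apply/eqP => e; apply: nm.
  by rewrite mulr0.
rewrite (eq_bigr _ (fun n _ => e n)).
rewrite (sum_supp (P := fun n => (n == m) && (g n != 0)) (T2 := [:: m])).
- by rewrite big_seq1 eqxx.
- by move=> n; case: eqP => //= -> /negPn /eqP ->.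
- exact: undup_uniq.
- by [].
- move=> n /andP [_ nz]; rewrite mem_undup; apply/negPn/negP => /hS e'.
  by rewrite e' eqxx in nz.
- by move=> n /andP [/eqP -> _]; rewrite inE.
Qed.


Section BalB.
Variable V : zmodType.
Variable f : A -> A -> V.
Hypothesis fbal : balancedB p pi f.

Lemma fB_x0 x : inL p pi x -> f x 0 = 0.
Proof.
case: fbal => _ [fa2 _] hx.
have := fa2 x 0 0 hx inL0 inL0; rewrite addr0 => h.
symmetry; apply: (addrI (f x 0)); rewrite addr0; exact: h.
Qed.

Lemma fB_0y y : inL p pi y -> f 0 y = 0.
Proof.
case: fbal => [fa1 _] hy.
have := fa1 0 0 y inL0 inL0 hy; rewrite addr0 => h.
symmetry; apply: (addrI (f 0 y)); rewrite addr0; exact: h.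
Qed.

Lemma fB_sumr (I : eqType) x (s0 : seq I) (G : I -> A) : inL p pi x ->
  (forall i, i \in s0 -> inL p pi (G i)) ->
  f x (\sum_(i <- s0) G i) = \sum_(i <- s0) f x (G i).
Proof.
case: fbal => _ [fa2 _] hx; elim: s0 => [|i s0 IH] h.
  by rewrite !big_nil fB_x0.
have hi : inL p pi (G i) by apply: h; rewrite in_cons eqxx.
have hs : forall j, j \in s0 -> inL p pi (G j).
  by move=> j js; apply: h; rewrite in_cons js orbT.
rewrite !big_cons fa2 // ?IH //; exact: inL_sum.
Qed.

Lemma fB_suml (I : eqType) y (s0 : seq I) (G : I -> A) : inL p pi y ->
  (forall i, i \in s0 -> inL p pi (G i)) ->
  f (\sum_(i <- s0) G i) y = \sum_(i <- s0) f (G i) y.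
Proof.
case: fbal => [fa1 _] hy; elim: s0 => [|i s0 IH] h.
  by rewrite !big_nil fB_0y.
have hi : inL p pi (G i) by apply: h; rewrite in_cons eqxx.
have hs : forall j, j \in s0 -> inL p pi (G j).
  by move=> j js; apply: h; rewrite in_cons js orbT.
rewrite !big_cons fa1 // ?IH //; exact: inL_sum.
Qed.

Definition Fterm (x z : A) (k : int) : V :=
  if (p%:Z %| k)%Z then \sum_(lr <- omega k) f (x * (z * lr.1)) lr.2 else 0.

Lemma key1 x y k : inL p pi x -> inL p pi y -> f x (pi k y) = Fterm x (pi k y) k.
Proof.
case: fbal => _ [_ fb] hx hy; rewrite /Fterm; case: ifP => d.
  rewrite -{1}(mulr1 (pi k y)) -(omega_sum k) big_distrr /=.
  rewrite fB_sumr //.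
    apply: eq_big_seq => lr lrin; rewrite mulrA fb //.
      apply: inB_hom; apply: omega_B lrin _; exact: hom_pi.
    exact: omega_L lrin d.
  move=> lr lrin; rewrite mulrA.
  have [_ h2] := omega_hom lrin.
  apply: inL_hom (homE (hom_mul (omega_B lrin (hom_pi k y)) h2) (add0r k)) d.
have -> : pi k y = 0.
  by apply/eqP; apply/negPn/negP => nz; rewrite (inL_dvd hy nz) in d.
exact: fB_x0.
Qed.

Definition Gterm (t : seq (A * A)) (k : int) : V :=
  if (p%:Z %| k)%Z then
    \sum_(lr <- omega k) f (can_map p pi t (k %/ p%:Z)%Z * lr.1) lr.2 else 0.

Lemma key2 t T : (forall xy, xy \in t -> inL p pi xy.1 /\ inL p pi xy.2) ->
  uniq T -> (forall xy k, xy \in t -> pi k xy.2 != 0 -> k \in T) ->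
  \sum_(xy <- t) f xy.1 xy.2 = \sum_(k <- T) Gterm t k.
Proof.
move=> ht uT hT.
transitivity (\sum_(xy <- t) \sum_(k <- T) Fterm xy.1 (pi k xy.2) k).
  apply: eq_big_seq => xy xyin; have [h1 h2] := ht xy xyin.
  rewrite {1}(dec_flex uT (hT xy^~ xyin)) fB_sumr //.
    by apply: eq_bigr => k _; rewrite key1.
  by move=> k _; apply: inL_pi.
rewrite exchange_big /=; apply: eq_bigr => k _.
rewrite /Gterm /Fterm; case: ifP => d; last by rewrite big1.
rewrite exchange_big /=; apply: eq_big_seq => lr lrin.
rewrite -fB_suml.
- congr (f _ _); rewrite /can_map /degc divzK // big_distrl /=.
  by apply: eq_bigr => xy _; rewrite mulrA.
- exact: omega_L lrin d.
- move=> xy xyin; have [h1 _] := ht xy xyin.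
  apply: inL_mulr h1 (omega_B lrin (hom_pi k xy.2)) _; exact: dvdz0.
Qed.

End BalB.

Lemma inj (t1 t2 : seq (A * A)) :
  (forall xy, xy \in t1 -> inL p pi xy.1 /\ inL p pi xy.2) ->
  (forall xy, xy \in t2 -> inL p pi xy.1 /\ inL p pi xy.2) ->
  (forall n, can_map p pi t1 n = can_map p pi t2 n) -> tensB_eq p pi t1 t2.
Proof.
move=> h1 h2 hc V f fbal.
pose T := undup (flatten [seq supp xy.2 | xy <- t1 ++ t2]).
have uT : uniq T by apply: undup_uniq.
have hT : forall t : seq (A * A), {subset t <= t1 ++ t2} ->
    forall xy k, xy \in t -> pi k xy.2 != 0 -> k \in T.
  move=> t sub xy k xyin nz; rewrite /T mem_undup; apply/flatten_mapP.
  by exists xy; [apply: sub | apply: supp_nz].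
rewrite (key2 fbal h1 uT (hT t1 _)); last by move=> xy xyin; rewrite mem_cat xyin.
rewrite (key2 fbal h2 uT (hT t2 _)); last by move=> xy xyin; rewrite mem_cat xyin orbT.
by apply: eq_bigr => k _; rewrite /Gterm hc.
Qed.


Definition supp' (x : A) := [seq k <- supp x | pi k x != 0].

Lemma supp'_uniq x : uniq (supp' x).
Proof. by rewrite filter_uniq //; case: (suppP x). Qed.

Lemma mem_supp' x k : (k \in supp' x) = (pi k x != 0).
Proof.
rewrite mem_filter; case nz: (pi k x != 0) => //=; exact: supp_nz.
Qed.

Definition sp (x : A) : seq (A * A) :=
  flatten [seq [seq (pi k x * lr.1, lr.2) | lr <- omega k] | k <- supp' x].

Lemma sp_mem x : inL p pi x -> forall xy, xy \in sp x -> inB pi xy.1 /\ inL p pi xy.2.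
Proof.
move=> hx xy /flatten_mapP [k kin /mapP [lr lrin ->]] /=.
rewrite mem_supp' in kin; have d := inL_dvd hx kin.
split; last exact: omega_L lrin d.
apply: inB_hom; apply: omega_B lrin _; exact: hom_pi.
Qed.

Lemma sp_sum x : inL p pi x -> \sum_(xy <- sp x) xy.1 * xy.2 = x.
Proof.
move=> hx; rewrite /sp big_flatten big_map.
rewrite [RHS](dec_flex (supp'_uniq x)); last by move=> k; rewrite mem_supp'.
apply: eq_bigr => k _; rewrite big_map -[RHS]mulr1 -(omega_sum k) big_distrr /=.
by apply: eq_bigr => lr _; rewrite mulrA.
Qed.

Section BalC.
Variable V : zmodType.
Variable f : A -> A -> V.
Hypothesis fbal : balancedC p pi f.

Lemma inB0 : inB pi 0.
Proof. by move=> k _; exact: pi0. Qed.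

Lemma fC_0y y : inL p pi y -> f 0 y = 0.
Proof.
case: fbal => [fa1 _] hy.
have := fa1 0 0 y inB0 inB0 hy; rewrite addr0 => h.
symmetry; apply: (addrI (f 0 y)); rewrite addr0; exact: h.
Qed.

Lemma fC_x0 x : inB pi x -> f x 0 = 0.
Proof.
case: fbal => _ [fa2 _] hx.
have := fa2 x 0 0 hx inL0 inL0; rewrite addr0 => h.
symmetry; apply: (addrI (f x 0)); rewrite addr0; exact: h.
Qed.

Definition Hterm (x : A) (k : int) : V :=
  if (p%:Z %| k)%Z then \sum_(lr <- omega k) f (pi k x * lr.1) lr.2 else 0.

Lemma Hterm0 x k : pi k x = 0 -> Hterm x k = 0.
Proof.
move=> e; rewrite /Hterm e; case: ifP => d //.
apply: big1_seq => lr /andP [_ lrin]; rewrite mul0r; apply: fC_0y.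
exact: omega_L lrin d.
Qed.

Lemma Phi x T : inL p pi x -> uniq T -> (forall k, pi k x != 0 -> k \in T) ->
  \sum_(xy <- sp x) f xy.1 xy.2 = \sum_(k <- T) Hterm x k.
Proof.
move=> hx uT hT; rewrite /sp big_flatten big_map.
transitivity (\sum_(k <- supp' x) Hterm x k).
  apply: eq_big_seq => k; rewrite mem_supp' => nz.
  by rewrite /Hterm (inL_dvd hx nz) big_map.
apply: (sum_supp (P := fun k => pi k x != 0)) => //.
- by move=> k /negPn /eqP e; apply: Hterm0.
- exact: supp'_uniq.
- by move=> k; rewrite mem_supp'.
Qed.

Lemma HtermD x y k : Hterm (x + y) k = Hterm x k + Hterm y k.
Proof.
case: fbal => [fa1 _]; rewrite /Hterm; case d: (p%:Z %| k)%Z; last by rewrite addr0.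
rewrite -big_split /=; apply: eq_big_seq => lr lrin.
rewrite piD mulrDl fa1 //.
- apply: inB_hom; apply: omega_B lrin _; exact: hom_pi.
- apply: inB_hom; apply: omega_B lrin _; exact: hom_pi.
- exact: omega_L lrin d.
Qed.

Lemma sp_add x y : inL p pi x -> inL p pi y ->
  \sum_(xy <- sp (x + y)) f xy.1 xy.2 = \sum_(xy <- sp x ++ sp y) f xy.1 xy.2.
Proof.
move=> hx hy; pose T := undup (supp x ++ supp y).
have uT : uniq T by apply: undup_uniq.
have hTx : forall k, pi k x != 0 -> k \in T.
  by move=> k nz; rewrite mem_undup mem_cat supp_nz.
have hTy : forall k, pi k y != 0 -> k \in T.
  by move=> k nz; rewrite mem_undup mem_cat (supp_nz nz) orbT.
rewrite big_cat (Phi (inLD hx hy) uT) ?(Phi hx uT) ?(Phi hy uT) //.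
  transitivity (\sum_(k <- T) (Hterm x k + Hterm y k)); first by apply: eq_bigr => k _; rewrite HtermD.
  exact: big_split.
move=> k; rewrite piD; case: (eqVneq (pi k x) 0) => [->|nz _]; last exact: hTx.
by rewrite add0r; apply: hTy.
Qed.

Lemma sp_lmod c x : inB pi c -> inL p pi x ->
  \sum_(xy <- sp (c * x)) f xy.1 xy.2 =
  \sum_(xy <- [seq (c * xy.1, xy.2) | xy <- sp x]) f xy.1 xy.2.
Proof.
move=> hc hx; have h0 := inB_hom0 hc.
have pic : forall k, pi k (c * x) = c * pi k x.
  by move=> k; rewrite (pi_mull _ _ h0) subr0.
have hcx : inL p pi (c * x).
  move=> k; rewrite pic => nz; apply: hx => e; apply: nz; rewrite e mulr0; done.
rewrite (Phi hcx (supp'_uniq x)); last first.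
  move=> k; rewrite pic mem_supp' => nz; apply/eqP => e; move: nz; rewrite e mulr0 eqxx; done.
rewrite big_map /sp big_flatten big_map; apply: eq_big_seq => k; rewrite mem_supp' => nz.
rewrite /Hterm (inL_dvd hx nz) big_map; apply: eq_bigr => lr _ /=.
by rewrite pic mulrA.
Qed.

Lemma sp_comod x n : inL p pi x ->
  \sum_(xy <- [seq (xy.1, degc p pi n xy.2) | xy <- sp x]) f xy.1 xy.2 =
  \sum_(xy <- sp (degc p pi n x)) f xy.1 xy.2.
Proof.
move=> hx; rewrite /degc.
have dn : (p%:Z %| n * p%:Z)%Z by apply: dvdz_mull; exact: dvdzz.
have hn : inL p pi (pi (n * p%:Z) x) by apply: inL_hom (hom_pi _ _) dn.
rewrite (Phi hn (supp'_uniq x)); last first.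
  move=> k; rewrite piorth mem_supp'; case: (eqVneq k (n * p%:Z)) => [->|ne] //=.
  by rewrite eqxx.
rewrite big_map /sp big_flatten big_map; apply: eq_big_seq => k; rewrite mem_supp' => nz.
rewrite /Hterm (inL_dvd hx nz) big_map piorth.
have dk := inL_dvd hx nz.
case: eqP => [e |ne] /=.
  apply: eq_big_seq => lr lrin /=.
  have [_ h2] := omega_hom lrin.
  by rewrite (pi_hom _ h2) -e eqxx.
have e0 : \sum_(lr <- omega k) f (0 * lr.1) lr.2 = 0.
  apply: big1_seq => lr /andP [_ lrin] /=.
  rewrite mul0r; apply: fC_0y; exact: omega_L lrin dk.
rewrite e0; apply: big1_seq => lr /andP [_ lrin] /=.
have [_ h2] := omega_hom lrin.
rewrite (pi_hom _ h2).
have -> : (n * p%:Z == k) = false by apply/eqP => e; apply: ne; rewrite e.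
apply: fC_x0; apply: inB_hom; apply: omega_B lrin _; exact: hom_pi.
Qed.

End BalC.

Lemma main : quantum_principal_fibration p pi.
Proof.
split; first exact: inj.
split; first exact: surj.
exists sp; split; first exact: sp_mem.
split; first exact: sp_sum.
split.
  move=> x y hx hy V f fb; exact: sp_add.
split.
  move=> c x hc hx V f fb; exact: sp_lmod.
move=> x n hx V f fb; exact: sp_comod.
Qed.

End Basics.

Unset Implicit Arguments.
Set Strict Implicit.

Theorem theorem5p3 (R : realType) (A : algType (complex R)) (s : A -> A)
  (a b : A) (p r : nat) (pi : int -> A -> A) :
  (0 < p)%N -> (0 < r)%N -> coprime p r ->
  is_O_SU0 s a b -> is_weight_grading s a b r pi ->
  quantum_principal_fibration p pi.
Proof.
move=> p0 r0 _ [_ [[r1 [r2 [r3 [r4 r5]]]] _]].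
move=> [piD [piZ [pidec [piorth [pimul [pia [pisa [pib pisb]]]]]]]].
case: r r0 pib pisb => [|r'] // _ pib pisb.
exact: (main p0 piD pidec piorth pimul r2 r3 r4 r5 pia pisa pib pisb).
Qed.
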